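(* Fix $\alpha,\beta\in(0,1)$ and $c>0$. There exist constants $K,c_1,c_2>0$ depending only on $\alpha,\beta,c$ such that the following holds for the decoupled process with parameters $(G,r,T,\alpha,\beta)$ at any time $t>0$. Let $u,v$ be nodes with $d_G(r,u),d_G(r,v)\le t$, let $w$ be their least common ancestor in $T$ (a common ancestor, possibly $u$ or $v$ itself, of maximal depth), $D=d_T(r,w)$, and $\delta=\max\{d_T(w,u),d_T(w,v)\}$. If $\delta>\beta(t-D)+K(t-D)^{0.5+c}$, then $$\Pr[\mathrm{origin}_t(u)=\mathrm{origin}_t(v)]\le e^{-c_1(t-D)^{c_2}}.$$
   Context: Decoupled process. Fix $\alpha,\beta\in[0,1]$, a connected locally finite undirected graph $G$, root $r$, and a BFS spanning tree $T$ of $G$ rooted at $r$ ($d_T(r,v)=d_G(r,v)$), oriented away from $r$, with parent map $p$. Let $Z_0=+1$, $Z_1,Z_2,\dots$ i.i.d. uniform on $\{-1,+1\}$, $Z_\infty=\bot$. Counter $\mathrm{count}_0=1$; $\mathrm{origin}_0(r)=0$ (and always $0$), $\mathrm{origin}_0(v)=\infty$ for $v\ne r$; $g_t(v)=Z_{\mathrm{origin}_t(v)}$. Update from $t$ to $t+1$ (independent choices): if $g_t(v)=g_t(p(v))=\bot$ then $\mathrm{origin}_{t+1}(v)=\infty$; nodes with $g_t(v)=\bot\ne g_t(p(v))$ are processed sequentially in a fixed order: w.p. $1-\alpha$, $\mathrm{origin}_{t+1}(v)=\mathrm{origin}_t(p(v))$; w.p. $\alpha$, $\mathrm{origin}_{t+1}(v)$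 is the current counter value and the counter is then incremented; if $g_t(v)\ne\bot$, $v\ne r$: w.p. $\beta$, $\mathrm{origin}_{t+1}(v)=\mathrm{origin}_t(p(v))$, otherwise unchanged. Nodes $u,v$ are in the same run at time $t$ iff $\mathrm{origin}_t(u)=\mathrm{origin}_t(v)$. *)

(* Defs.v *)
From HB Require Import structures.
From mathcomp Require Import all_boot all_order all_algebra.
From mathcomp Require Import reals sequences exp.
Set Implicit Arguments. Unset Strict Implicit. Unset Printing Implicit Defensive.
Import Order.TTheory GRing.Theory Num.Theory.
Local Open Scope ring_scope.

(* A locally finite undirected graph on V is given by finite adjacency
   lists [nbr x]; undirectedness is the symmetry hypothesis [undirected]. *)
Definition undirected (V : eqType) (nbr : V -> seq V) : Prop :=
  forall x y : V, (y \in nbr x) = (x \in nbr y).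

Definition adj (V : eqType) (nbr : V -> seq V) : rel V := fun x y => y \in nbr x.

Definition gdist (V : eqType) (nbr : V -> seq V) (r v : V) (n : nat) : Prop :=
  (exists s : seq V, [/\ path (adj nbr) r s, last r s = v & size s = n]) /\
  (forall s : seq V, path (adj nbr) r s -> last r s = v -> (n <= size s)%N).

(* In the tree T given by the parent map p (convention p r = r), a is an
   ancestor of x (possibly x itself). *)
Definition anc (V : eqType) (p : V -> V) (a x : V) : Prop :=
  exists n : nat, iter n p x = a.

Definition tdist (V : eqType) (p : V -> V) (a x : V) (n : nat) : Prop :=
  iter n p x = a /\ (forall m : nat, (m < n)%N -> iter m p x <> a).

Definition bfs_tree (V : eqType) (nbr : V -> seq V) (r : V) (p : V -> V) : Prop :=
  [/\ p r = r,
      (forall v, v != r -> p v \in nbr v) &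
      (forall v, exists n, tdist p r v n /\ gdist nbr r v n)].

Definition is_lca (V : eqType) (r : V) (p : V -> V) (u v w : V) : Prop :=
  [/\ anc p w u, anc p w v &
      forall a da dw, anc p a u -> anc p a v -> tdist p r a da -> tdist p r w dw ->
        (da <= dw)%N].

(* origin : V -> option nat, with None = infinity (so g_t(v) = Z_{origin} is
   bot iff origin = None; the +-1 values of Z never influence origins).
   A state is (origin, counter, S) where S lists the nodes with origin <> None. *)
Definition state (V : eqType) := ((V -> option nat) * nat * seq V)%type.

Definition upd (V : eqType) (f : V -> option nat) (v : V) (x : option nat) :=
  fun y => if y == v then x else f y.

Section Process.
Variables (R : realType) (alpha beta : R) (V : eqType)
          (nbr : V -> seq V) (r : V) (p : V -> V) (rank : V -> nat).

(* Process the nodes of L sequentially; o is the (old) origin function at time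
   t, acc = (new origin function being built, current counter). Returns the
   weighted list of outcomes. *)
Fixpoint proc (o : V -> option nat) (L : seq V)
    (acc : (V -> option nat) * nat) : seq (R * ((V -> option nat) * nat)) :=
  match L with
  | [::] => [:: (1, acc)]
  | v :: L' =>
    let f := acc.1 in let c := acc.2 in
    if o v == None then
      (* g_t(v) = bot <> g_t(p v) *)
      [seq ((1 - alpha) * ws.1, ws.2) | ws <- proc o L' (upd f v (o (p v)), c)] ++
      [seq (alpha * ws.1, ws.2) | ws <- proc o L' (upd f v (Some c), c.+1)]
    else
      (* g_t(v) <> bot, v <> r *)
      [seq (beta * ws.1, ws.2) | ws <- proc o L' (upd f v (o (p v)), c)] ++
      [seq ((1 - beta) * ws.1, ws.2) | ws <- proc o L' (f, c)]
  end.

Definition newborns (o : V -> option nat) (S : seq V) : seq V :=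
  sort (fun x y => (rank x <= rank y)%N)
    (undup [seq y <- flatten (map nbr S) |
            [&& y != r, o y == None & o (p y) != None]]).

Definition step (st : state V) : seq (R * state V) :=
  let: (o, c, Sl) := st in
  let N := newborns o Sl in
  [seq (ws.1, (ws.2.1, ws.2.2, Sl ++ N)) |
     ws <- proc o (N ++ [seq x <- Sl | x != r]) (o, c)].

Definition init_state : state V :=
  (fun v => if v == r then Some 0%N else None, 1%N, [:: r]).

Fixpoint dist (t : nat) : seq (R * state V) :=
  match t with
  | 0 => [:: (1, init_state)]
  | t'.+1 => flatten [seq [seq (ws.1 * ws'.1, ws'.2) | ws' <- step ws.2]
                     | ws <- dist t']
  end.

Definition origin (st : state V) : V -> option nat := st.1.1.

Definition prob (t : nat) (E : state V -> bool) : R :=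
  \sum_(ws <- dist t) (if E ws.2 then ws.1 else 0).

End Process.

(* Main.v *)
Set Warnings "-notation-overridden,-ambiguous-paths,-notation-incompatible-prefix".
Require Import Defs.
From HB Require Import structures.
From mathcomp Require Import all_boot all_order all_algebra.
From mathcomp Require Import reals sequences exp.
From Stdlib Require List.
From mathcomp Require Import ring lra zify.
Import Order.TTheory GRing.Theory Num.Theory.
Local Open Scope ring_scope.
Set Implicit Arguments. Unset Strict Implicit. Unset Printing Implicit Defensive.

Section ExSec.
Variable R : realType.

Definition Ex (T : Type) (l : seq (R * T)) (G : T -> R) : R :=
  \sum_(ws <- l) ws.1 * G ws.2.

Lemma Ex_cat T (l1 l2 : seq (R * T)) G : Ex (l1 ++ l2) G = Ex l1 G + Ex l2 G.
Proof. by rewrite /Ex big_cat. Qed.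

Lemma Ex_scale T (l : seq (R * T)) a G :
  Ex [seq (a * ws.1, ws.2) | ws <- l] G = a * Ex l G.
Proof. by rewrite /Ex big_map mulr_sumr; apply: eq_bigr => ws _ /=; rewrite mulrA. Qed.

Lemma Ex_bind T U (l : seq (R * T)) (f : T -> seq (R * U)) G :
  Ex (flatten [seq [seq (ws.1 * ws'.1, ws'.2) | ws' <- f ws.2] | ws <- l]) G
  = Ex l (fun x => Ex (f x) G).
Proof.
rewrite /Ex big_flatten big_map; apply: eq_bigr => ws _.
exact: (Ex_scale (f ws.2) ws.1 G).
Qed.

Lemma ExZ T (l : seq (R * T)) a G : Ex l (fun x => a * G x) = a * Ex l G.
Proof. by rewrite /Ex mulr_sumr; apply: eq_bigr => ws _; rewrite mulrCA. Qed.

Lemma Ex_le T (l : seq (R * T)) G H :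
  (forall ws, List.In ws l -> 0 <= ws.1) ->
  (forall ws, List.In ws l -> G ws.2 <= H ws.2) -> Ex l G <= Ex l H.
Proof.
elim: l => [|x l IH] h0 h; first by rewrite /Ex !big_nil.
rewrite /Ex !big_cons; apply: lerD.
  by apply: ler_wpM2l; [apply: h0|apply: h]; left.
by apply: IH => ws hin; [apply: h0|apply: h]; right.
Qed.

Lemma Ex_eq T (l : seq (R * T)) G H :
  (forall ws, List.In ws l -> G ws.2 = H ws.2) -> Ex l G = Ex l H.
Proof.
elim: l => [|x l IH] h; first by rewrite /Ex !big_nil.
rewrite /Ex !big_cons h; last by left.
by congr (_ + _); apply: IH => ws hin; apply: h; right.
Qed.

Lemma Ex_const T (l : seq (R * T)) a : Ex l (fun _ => a) = a * Ex l (fun _ => 1).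
Proof. by rewrite -ExZ; apply: Ex_eq => ws _; rewrite mulr1. Qed.

End ExSec.

Section ProcSec.
Variables (R : realType) (alpha beta : R) (V : eqType) (p : V -> V).
Hypothesis ha : 0 <= alpha <= 1.
Hypothesis hb : 0 <= beta <= 1.

Lemma In_cat_map (T : Type) (a b : R) (l1 l2 : seq (R * T)) ws :
  List.In ws ([seq (a * x.1, x.2) | x <- l1] ++ [seq (b * x.1, x.2) | x <- l2]) ->
  exists x, (List.In x l1 /\ ws = (a * x.1, x.2)) \/ (List.In x l2 /\ ws = (b * x.1, x.2)).
Proof.
move=> hin; case: (List.in_app_or _ _ _ hin) => /(List.in_map_iff _ _ _) [x [<- hx]];
  exists x; by [left|right].
Qed.

Local Notation proc := (proc alpha beta p).

Lemma Ex_proc_cons o v L f c G :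
  Ex (proc o (v :: L) (f, c)) G =
  if o v == None then
    (1 - alpha) * Ex (proc o L (upd f v (o (p v)), c)) G +
    alpha * Ex (proc o L (upd f v (Some c), c.+1)) G
  else
    beta * Ex (proc o L (upd f v (o (p v)), c)) G +
    (1 - beta) * Ex (proc o L (f, c)) G.
Proof. by rewrite /=; case: ifP => _; rewrite Ex_cat !Ex_scale. Qed.

Lemma proc_ge0 o L acc ws : List.In ws (proc o L acc) -> 0 <= ws.1.
Proof.
have /andP[a0 a1] := ha; have /andP[b0 b1] := hb.
elim: L acc ws => [|v L IH] [f c] ws /=.
  by case=> // <-.
case: ifP => _; move=> /In_cat_map [ws' [[/IH h ->]|[/IH h ->]]] /=;
  apply: mulr_ge0 => //; by rewrite subr_ge0.
Qed.

Lemma proc_sum1 o L acc : Ex (proc o L acc) (fun _ => 1) = 1.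
Proof.
elim: L acc => [|v L IH] [f c]; first by rewrite /Ex big_seq1 mulr1.
by rewrite Ex_proc_cons !IH !mulr1; case: ifP => _; ring.
Qed.

Lemma proc_notin o L acc y ws : y \notin L -> List.In ws (proc o L acc) -> ws.2.1 y = acc.1 y.
Proof.
elim: L acc ws => [|v L IH] [f c] ws /=.
  by move=> _ [] // <-.
rewrite inE negb_or => /andP[yv yL].
have hupd : forall x, upd f v x y = f y by move=> x; rewrite /upd (negbTE yv).
case: ifP => _; move=> /In_cat_map [ws' [[/(IH _ _ yL) h ->]|[/(IH _ _ yL) h ->]]] /=;
  by rewrite h //= ?hupd.
Qed.

Lemma proc_in o L f c y ws : uniq L -> y \in L -> List.In ws (proc o L (f, c)) ->
  if o y == None then ws.2.1 y = o (p y) \/ (exists a, ws.2.1 y = Some a /\ (c <= a)%N)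
  else ws.2.1 y = o (p y) \/ ws.2.1 y = f y.
Proof.
elim: L f c ws => [|v L IH] f c ws //= /andP[vL uL].
rewrite inE => /orP[/eqP yv|yL].
  subst y.
  have hn : forall acc ws', List.In ws' (proc o L acc) -> ws'.2.1 v = acc.1 v.
    by move=> acc ws'; apply: proc_notin.
  case: ifP => ov; move=> /In_cat_map [ws' [[/hn h ->]|[/hn h ->]]] /=;
    rewrite h /= ?/upd ?eqxx /=; first [by left | by right; exists c | by right].
have yv : y != v by apply: contraNneq vL => <-.
have hupd : forall x, upd f v x y = f y by move=> x; rewrite /upd (negbTE yv).
case: ifP => ov; move=> /In_cat_map [ws' [[h ->]|[h ->]]] /=;
  move: (IH _ _ _ uL yL h); rewrite ?hupd //.
case: ifP => // _ [->|[a [-> ca]]]; [by left| by right; exists a; split => //; apply: ltnW].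
Qed.

Lemma proc_fresh o L f c c0 ws :
  (c0 <= c)%N ->
  (forall y a, o y = Some a -> (a < c0)%N) ->
  (forall y a, f y = Some a -> (a < c)%N) ->
  (forall y y' a, f y = Some a -> f y' = Some a -> (c0 <= a)%N -> y = y') ->
  List.In ws (proc o L (f, c)) ->
  [/\ (c <= ws.2.2)%N,
      (forall y a, ws.2.1 y = Some a -> (a < ws.2.2)%N) &
      (forall y y' a, ws.2.1 y = Some a -> ws.2.1 y' = Some a -> (c0 <= a)%N -> y = y')].
Proof.
elim: L f c ws => [|v L IH] f c ws c0c ho hf hu /=.
  by case=> // <-.
have hcopy : forall c', (c0 <= c')%N -> (forall y a, f y = Some a -> (a < c')%N) ->
   [/\ (forall y a, upd f v (o (p v)) y = Some a -> (a < c')%N) &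
   (forall y y' a, upd f v (o (p v)) y = Some a -> upd f v (o (p v)) y' = Some a ->
      (c0 <= a)%N -> y = y')].
  move=> c' c0c' hf'; split.
    move=> y a; rewrite /upd; case: ifP => _; last exact: hf'.
    by move/ho => h; apply: leq_trans h c0c'.
  move=> y y' a; rewrite /upd; case: ifP => _.
    by move/ho => h _ /(leq_trans h); rewrite ltnn.
  case: ifP => _; last exact: hu.
  by move=> _ /ho h /(leq_trans h); rewrite ltnn.
have [hc1 hc2] := hcopy c c0c hf.
have hfr1 : forall y a, upd f v (Some c) y = Some a -> (a < c.+1)%N.
  move=> y a; rewrite /upd; case: ifP => _; first by case=> ->.
  by move/hf => h; apply: ltnW.
have hfr2 : forall y y' a, upd f v (Some c) y = Some a -> upd f v (Some c) y' = Some a ->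
      (c0 <= a)%N -> y = y'.
  move=> y y' a; rewrite /upd; case: ifP => /eqP yv; case: ifP => /eqP y'v.
  - by rewrite yv y'v.
  - by case=> <- /hf; rewrite ltnn.
  - by move=> /hf h [] ha'; move: h; rewrite ha' ltnn.
  - exact: hu.
case: ifP => _; move=> /In_cat_map [ws' [[h ->]|[h ->]]] /=.
- exact: IH h.
- have [] := IH _ _ _ (leq_trans c0c (leqnSn c)) ho hfr1 hfr2 h.
  by move=> h1 h2 h3; split => //; apply: ltnW.
- exact: IH h.
- exact: IH h.
Qed.

Lemma proc_copy o L f c z :
  uniq L -> z \in L -> f z != o (p z) ->
  (forall y a, o y = Some a -> (a < c)%N) ->
  Ex (proc o L (f, c)) (fun acc => if acc.1 z == o (p z) then 1 else 0)
  <= (if o z == None then 1 - alpha else beta).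
Proof.
have /andP[a0 a1] := ha; have /andP[b0 b1] := hb.
elim: L f c => [|v L IH] f c //= /andP[vL uL].
rewrite Ex_proc_cons inE => /orP[/eqP zv|zL] fz ho.
  subst z.
  have hle : forall acc, Ex (proc o L acc) (fun acc => if acc.1 v == o (p v) then 1 else 0) <= 1.
    move=> acc; rewrite -[X in _ <= X](proc_sum1 o L acc).
    apply: Ex_le => [ws|ws _]; first exact: proc_ge0.
    by case: ifP => _; rewrite ?lexx ?ler01.
  have h0 : forall acc, acc.1 v != o (p v) ->
      Ex (proc o L acc) (fun acc => if acc.1 v == o (p v) then 1 else 0) = 0.
    move=> acc hacc; rewrite (@Ex_eq _ _ _ _ (fun _ => 0)).
      by rewrite /Ex big1 // => ws _; rewrite mulr0.
    by move=> ws hin; rewrite (proc_notin vL hin) (negbTE hacc).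
  case: ifP => ov.
    rewrite [X in alpha * X]h0 /=; last first.
      rewrite /upd eqxx; case e: (o (p v)) => [a|] //.
      by apply/eqP => -[ac]; move: (ho _ _ e); rewrite ac ltnn.
    by rewrite mulr0 addr0 -[X in _ <= X]mulr1 ler_wpM2l ?subr_ge0.
  by rewrite [X in (1 - beta) * X]h0 // mulr0 addr0 -[X in _ <= X]mulr1 ler_wpM2l.
have zv : z != v by apply: contraNneq vL => <-.
have hupd : forall x, upd f v x z = f z by move=> x; rewrite /upd (negbTE zv).
have ho' : forall y a, o y = Some a -> (a < c.+1)%N by move=> y a /ho /ltnW.
case: ifP => _.
  apply: le_trans (_ : (1 - alpha) * (if o z == None then 1 - alpha else beta) +
                       alpha * (if o z == None then 1 - alpha else beta) <= _).
    apply: lerD; apply: ler_wpM2l; rewrite ?subr_ge0 //; apply: IH => //; by rewrite hupd.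
  by rewrite -mulrDl subrK mul1r.
apply: le_trans (_ : beta * (if o z == None then 1 - alpha else beta) +
                     (1 - beta) * (if o z == None then 1 - alpha else beta) <= _).
  apply: lerD; apply: ler_wpM2l; rewrite ?subr_ge0 //; apply: IH => //; by rewrite hupd.
by rewrite -mulrDl addrC subrK mul1r.
Qed.

End ProcSec.


Section Depth.
Variables (V : eqType) (r : V) (p : V -> V).
Hypothesis hpr : p r = r.
Hypothesis hex : forall y, exists n, iter n p y == r.

Definition depth y : nat := ex_minn (hex y).

Lemma depth_iter y : iter (depth y) p y = r.
Proof. by rewrite /depth; case: ex_minnP => n /eqP. Qed.

Lemma depth_min y n : iter n p y = r -> (depth y <= n)%N.
Proof. by rewrite /depth; case: ex_minnP => m _ h /eqP /h. Qed.

Lemma iter_r n : iter n p r = r.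
Proof. by elim: n => //= n ->. Qed.

Lemma depth_r : depth r = 0%N.
Proof. by apply/eqP; rewrite -leqn0; apply: depth_min. Qed.

Lemma depth0 y : depth y = 0%N -> y = r.
Proof. by move=> h; have := depth_iter y; rewrite h. Qed.

Lemma depth_p y : y != r -> depth y = (depth (p y)).+1.
Proof.
move=> yr; apply/eqP; rewrite eqn_leq; apply/andP; split.
  by apply: depth_min; rewrite iterSr depth_iter.
case e: (depth y) => [|d]; first by move/depth0: e => /eqP; rewrite (negbTE yr).
by apply: depth_min; rewrite -iterSr -e depth_iter.
Qed.

Lemma depth_pB y : depth (p y) = (depth y).-1.
Proof.
case: (eqVneq y r) => [->|yr]; first by rewrite hpr depth_r.
by rewrite (depth_p yr).
Qed.

Lemma depth_p_le y : (depth (p y) <= depth y)%N.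
Proof. by rewrite depth_pB leq_pred. Qed.

Lemma depth_iterp k y : depth (iter k p y) = (depth y - k)%N.
Proof.
elim: k => [|k IH]; first by rewrite subn0.
by rewrite iterS depth_pB IH subnS.
Qed.

Lemma tdist_depth y n : tdist p r y n -> n = depth y.
Proof.
case=> h hmin; apply/eqP; rewrite eqn_leq depth_min // andbT.
rewrite leqNgt; apply/negP => lt; exact: (hmin _ lt (depth_iter y)).
Qed.

Lemma tdist_depthP y : tdist p r y (depth y).
Proof.
split; first exact: depth_iter.
by move=> m lt h; have := depth_min h; rewrite leqNgt lt.
Qed.

Lemma tdist_anc a y d : tdist p a y d -> depth y = (depth a + d)%N /\ iter d p y = a.
Proof.
case=> h hmin; split => //.
have dle : (d <= depth y)%N.
  rewrite leqNgt; apply/negP => lt.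
  have ha : a = r by rewrite -h -(subnK (ltnW lt)) iterD depth_iter iter_r.
  by apply: (hmin _ lt); rewrite ha depth_iter.
by rewrite -h depth_iterp subnK.
Qed.

Definition anc_at k y := iter (depth y - k) p y.

Lemma depth_anc_at k y : (k <= depth y)%N -> depth (anc_at k y) = k.
Proof. by move=> h; rewrite /anc_at depth_iterp subKn. Qed.

Lemma anc_at_p k y : y != r -> (k <= depth (p y))%N -> anc_at k y = anc_at k (p y).
Proof.
move=> yr h; rewrite /anc_at (depth_p yr) subSn // iterSr //.
Qed.

End Depth.


Section StepSec.
Variables (R : realType) (alpha beta : R) (V : eqType) (nbr : V -> seq V) (r : V)
          (p : V -> V) (rank : V -> nat).
Hypothesis ha : 0 <= alpha <= 1.
Hypothesis hb : 0 <= beta <= 1.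
Hypothesis hund : undirected nbr.
Hypothesis hpr : p r = r.
Hypothesis hpn : forall v, v != r -> p v \in nbr v.
Hypothesis hex : forall y, exists n, iter n p y == r.

Local Notation dep := (depth hex).
Local Notation step := (step alpha beta nbr r p rank).
Local Notation proc := (proc alpha beta p).
Local Notation newborns := (newborns nbr r p rank).

Definition Inv (s : nat) (st : state V) : Prop :=
  [/\ uniq st.2, (forall y, (y \in st.2) = (st.1.1 y != None)),
      (forall y, (st.1.1 y != None) = (dep y <= s)%N) &
      (forall y a, st.1.1 y = Some a -> (a < st.1.2)%N)].

Lemma Inv0 : Inv 0 (init_state r).
Proof.
split => //= [y|y|y a].
- by rewrite inE; case: (eqVneq y r).
- case: (eqVneq y r) => [->|yr]; first by rewrite depth_r.
  by rewrite leqn0; apply/esym/negP => /eqP /depth0 /eqP; rewrite (negbTE yr).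
- by case: (eqVneq y r) => // _ [<-].
Qed.

Lemma mem_newborns o Sl y : (y \in newborns o Sl) =
  [&& y \in flatten [seq nbr i | i <- Sl], y != r, o y == None & o (p y) != None].
Proof. by rewrite /Defs.newborns mem_sort mem_undup mem_filter andbC. Qed.

Lemma nb_depth s o c Sl y : Inv s (o, c, Sl) ->
  (y \in newborns o Sl) = (dep y == s.+1).
Proof.
case=> /= _ hS hD _; rewrite mem_newborns.
apply/idP/idP.
  case/and4P => _ yr oy opy.
  rewrite hD in opy.
  have ny : ~~ (dep y <= s)%N by rewrite -hD negbK.
  rewrite eqn_leq (depth_p hex yr) ltnS opy /=.
  by rewrite -(depth_p hex yr) ltnNge.
move/eqP => dy.
have yr : y != r by apply/eqP => yr; move: dy; rewrite yr depth_r.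
have dpy : dep (p y) = s by move: dy; rewrite (depth_p hex yr) => -[].
apply/and4P; split => //.
- apply/flatten_mapP; exists (p y); first by rewrite hS hD dpy.
  by rewrite hund hpn.
- by rewrite -[_ == _]negbK hD dy ltnn.
- by rewrite hD dpy.
Qed.

Definition stepL o Sl := newborns o Sl ++ [seq x <- Sl | x != r].

Lemma stepL_uniq s o c Sl : Inv s (o, c, Sl) -> uniq (stepL o Sl).
Proof.
move=> hI; have [/= hu hS _ _] := hI.
rewrite /stepL cat_uniq filter_uniq // andbT sort_uniq undup_uniq /=.
apply/hasPn => x; rewrite mem_filter => /andP[_ xS].
by rewrite hS in xS; rewrite mem_newborns (negbTE xS) !andbF.
Qed.

Lemma In_step st ws : List.In ws (step st) ->
  exists ws', List.In ws' (proc st.1.1 (stepL st.1.1 st.2) (st.1.1, st.1.2)) /\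
    ws = (ws'.1, (ws'.2.1, ws'.2.2, st.2 ++ newborns st.1.1 st.2)).
Proof.
case: st => [[o c] Sl] /= /(List.in_map_iff _ _ _) [ws' [<- h]].
by exists ws'.
Qed.

Lemma step_ge0 st ws : List.In ws (step st) -> 0 <= ws.1.
Proof. by case/In_step => ws' [h ->]; exact: (proc_ge0 ha hb h). Qed.

Lemma Ex_map2 (T U : Type) (l : seq (R * T)) (g : T -> U) G :
  Ex [seq (ws.1, g ws.2) | ws <- l] G = Ex l (fun x => G (g x)).
Proof. by rewrite /Ex big_map. Qed.

Lemma Ex_step st G : Ex (step st) G =
  Ex (proc st.1.1 (stepL st.1.1 st.2) (st.1.1, st.1.2))
     (fun x => G (x.1, x.2, st.2 ++ newborns st.1.1 st.2)).
Proof. by case: st => [[o c] Sl]; rewrite /= /Ex big_map. Qed.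

Lemma step_sum1 st : Ex (step st) (fun _ => 1) = 1.
Proof. by rewrite Ex_step; apply: proc_sum1. Qed.

Lemma step_char s st ws : Inv s st -> List.In ws (step st) ->
  [/\ (st.1.2 <= ws.2.1.2)%N,
      (forall y, ws.2.1.1 y = st.1.1 y \/ (y != r /\ ws.2.1.1 y = st.1.1 (p y)) \/
                 (st.1.1 y = None /\ exists a, ws.2.1.1 y = Some a /\ (st.1.2 <= a)%N)),
      (forall y a, ws.2.1.1 y = Some a -> (a < ws.2.1.2)%N) &
      (forall y y' a, ws.2.1.1 y = Some a -> ws.2.1.1 y' = Some a -> (st.1.2 <= a)%N -> y = y')].
Proof.
case: st => [[o c] Sl] hI /In_step [ws' [hin ->]] /=.
have [_ _ _ hc] := hI.
have hu0 : forall y y' a, o y = Some a -> o y' = Some a -> (c <= a)%N -> y = y'.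
  by move=> y y' a /hc h _ /(leq_trans h); rewrite ltnn.
have [h1 h2 h3] := proc_fresh (leqnn c) hc hc hu0 hin.
split => // y.
case: (boolP (y \in stepL o Sl)) => yL; last by left; rewrite (proc_notin yL hin).
have := proc_in (stepL_uniq hI) yL hin.
have yr : y != r.
  move: yL; rewrite mem_cat mem_filter mem_newborns => /orP[/and4P[]|/andP[]] //.
case: ifP => [/eqP oy|_] [h|h].
- by right; left.
- by right; right.
- by right; left.
- by left.
Qed.

Lemma step_inv s st ws : Inv s st -> List.In ws (step st) -> Inv s.+1 ws.2.
Proof.
case: st => [[o c] Sl] hI hin.
have [hc hch hv _] := step_char hI hin.
have [/= hu hS hD hc0] := hI.
case/In_step: (hin) => ws' [hin' ews]; rewrite /= in hin'; rewrite ews /=.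
set N := newborns o Sl.
have hN : forall y, (y \in N) = (dep y == s.+1) by move=> y; apply: nb_depth hI.
have hNo : forall y, y \in N -> o y = None /\ o (p y) != None.
  by move=> y; rewrite mem_newborns => /and4P[_ _ /eqP -> ->].
have hpd : forall y, o y != None -> o (p y) != None.
  by move=> y; rewrite !hD => h; apply: leq_trans h; apply: depth_p_le.
have G2 : forall y, (y \in Sl ++ N) = (ws'.2.1 y != None).
  move=> y; case: (boolP (y \in stepL o Sl)) => yL.
    have := proc_in (stepL_uniq hI) yL hin'.
    rewrite mem_cat.
    case: ifP => [/eqP oy|oy].
      have yN : y \in N.
        by move: yL; rewrite mem_cat mem_filter hS oy /= andbF orbF.
      rewrite yN orbT => -[->|[a [-> _]]] //; by case: (hNo y yN).
    have yS : y \in Sl by rewrite hS oy.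
    rewrite yS /= => -[->|->]; apply/esym; [by apply: hpd; rewrite oy| by rewrite oy].
  rewrite (proc_notin yL hin') /= mem_cat.
  have yN : y \notin N by apply: contra yL; rewrite mem_cat => ->.
  by rewrite (negbTE yN) orbF hS.
split => /=.
- rewrite cat_uniq hu /= sort_uniq undup_uniq andbT.
  apply/hasPn => x; rewrite mem_newborns hS => /and4P[_ _ /eqP -> _] //.
- exact: G2.
- move=> y; rewrite -G2 mem_cat hN hS hD.
  by rewrite [X in _ = X]leq_eqVlt ltnS orbC.
- by move=> y a; move: (hv y a); rewrite ews.
Qed.

End StepSec.


Section RunSec.
Variables (R : realType) (alpha beta : R) (V : eqType) (nbr : V -> seq V) (r : V)
          (p : V -> V) (rank : V -> nat).
Hypothesis ha : 0 <= alpha <= 1.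
Hypothesis hb : 0 <= beta <= 1.

Local Notation step := (step alpha beta nbr r p rank).

Fixpoint run (k : nat) (st : state V) : seq (R * state V) :=
  match k with
  | 0 => [:: (1, st)]
  | k'.+1 => flatten [seq [seq (ws.1 * ws'.1, ws'.2) | ws' <- step ws.2] | ws <- run k' st]
  end.

Lemma dist_run t : dist alpha beta nbr r p rank t = run t (init_state r).
Proof. by elim: t => //= t ->. Qed.

Lemma Ex1 (T : Type) (x : T) (G : T -> R) : Ex [:: (1, x)] G = G x.
Proof. by rewrite /Ex big_seq1 mul1r. Qed.

Lemma Ex_run_S k st G : Ex (run k.+1 st) G = Ex (run k st) (fun s => Ex (step s) G).
Proof. by rewrite /= Ex_bind. Qed.

Lemma Ex_run_add a b st G :
  Ex (run (a + b) st) G = Ex (run a st) (fun s => Ex (run b s) G).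
Proof.
elim: b G => [|b IH] G.
  by rewrite addn0; apply: Ex_eq => ws _; rewrite Ex1.
by rewrite addnS Ex_run_S IH; apply: Ex_eq => ws _; rewrite Ex_run_S.
Qed.

Lemma In_bind (T U : Type) (l : seq (R * T)) (f : T -> seq (R * U)) ws :
  List.In ws (flatten [seq [seq (w.1 * w'.1, w'.2) | w' <- f w.2] | w <- l]) ->
  exists w w', [/\ List.In w l, List.In w' (f w.2) & ws = (w.1 * w'.1, w'.2)].
Proof.
elim: l => [|w l IH] //= hin; case: (List.in_app_or _ _ _ hin).
  by case/(List.in_map_iff _ _ _) => w' [<- h]; exists w, w'; split => //; left.
by case/IH => w0 [w' [h1 h2 h3]]; exists w0, w'; split => //; right.
Qed.

Lemma run_ge0 k st ws : List.In ws (run k st) -> 0 <= ws.1.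
Proof.
elim: k ws => [|k IH] ws /=; first by case=> // <-.
case/In_bind => w [w' [h1 h2 ->]] /=.
by apply: mulr_ge0; [apply: IH | apply: (step_ge0 ha hb h2)].
Qed.

Lemma run_sum1 k st : Ex (run k st) (fun _ => 1) = 1.
Proof.
elim: k => [|k IH]; first by rewrite Ex1.
by rewrite Ex_run_S -[RHS]IH; apply: Ex_eq => ws _; rewrite step_sum1.
Qed.

Lemma run_inv (P : nat -> state V -> Prop) s0 st k ws :
  (forall s st ws, (s0 <= s)%N -> P s st -> List.In ws (step st) -> P s.+1 ws.2) ->
  P s0 st -> List.In ws (run k st) -> P (s0 + k)%N ws.2.
Proof.
move=> hP h0; elim: k ws => [|k IH] ws /=; first by case=> // <-; rewrite addn0.
case/In_bind => w [w' [h1 h2 ->]] /=.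
by rewrite addnS; apply: hP h2 => //; [apply: leq_addr | apply: IH].
Qed.

End RunSec.


Section PotSec.
Variables (R : realType) (alpha beta : R) (V : eqType) (nbr : V -> seq V) (r : V)
          (p : V -> V) (rank : V -> nat).
Hypothesis ha : 0 <= alpha <= 1.
Hypothesis hb : 0 <= beta <= 1.
Hypothesis hund : undirected nbr.
Hypothesis hpr : p r = r.
Hypothesis hpn : forall v, v != r -> p v \in nbr v.
Hypothesis hex : forall y, exists n, iter n p y == r.

Local Notation dep := (depth hex).
Local Notation step := (step alpha beta nbr r p rank).
Local Notation Inv := (Inv hex).

Variables (D C delta : nat) (zend : V).
Hypothesis hz : dep zend = (D + delta)%N.

Definition xp i := iter (delta - i) p zend.

Lemma dep_xp i : (i <= delta)%N -> dep (xp i) = (D + i)%N.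
Proof. by move=> h; rewrite /xp (depth_iterp hpr) hz; lia. Qed.

Lemma p_xp i : (i < delta)%N -> p (xp i.+1) = xp i.
Proof.
move=> h; rewrite /xp; have -> : (delta - i = (delta - i.+1).+1)%N by lia.
by rewrite iterS.
Qed.

Lemma xp_nr i : (i < delta)%N -> xp i.+1 != r.
Proof.
move=> h; apply/eqP => e; have := dep_xp h; rewrite e depth_r; lia.
Qed.

Definition Jinv (st : state V) : Prop :=
  [/\ (C <= st.1.2)%N,
      (forall y a, (dep y <= D)%N -> st.1.1 y = Some a -> (a < C)%N) &
      (forall y y' a, st.1.1 y = Some a -> st.1.1 y' = Some a -> (C <= a)%N ->
          (D < dep y)%N /\ anc_at hex D.+1 y = anc_at hex D.+1 y')].

Lemma Jinv0 st : Inv D st -> st.1.2 = C -> Jinv st.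
Proof.
case=> _ _ _ hc hC; split.
- by rewrite hC.
- by move=> y a _ /hc; rewrite hC.
- by move=> y y' a /hc; rewrite hC => h _ /(leq_trans h); rewrite ltnn.
Qed.

Lemma Jinv_step s st ws : (D <= s)%N -> Inv s st -> Jinv st -> List.In ws (step st) ->
  Jinv ws.2.
Proof.
move=> Ds hI hJ hin.
have [hc hch hv hfr] := step_char hI hin.
have [_ _ hD hc0] := hI.
have [JC J1 J2] := hJ.
split.
- exact: leq_trans JC hc.
- move=> y a dy; case: (hch y) => [->|[[yr ->]|[oy _]]].
  + exact: J1.
  + by apply: J1; apply: leq_trans dy; apply: depth_p_le.
  + by move: (hD y); rewrite oy /=; lia.
have src : forall y a, ws.2.1.1 y = Some a -> (a < st.1.2)%N ->
    exists z, st.1.1 z = Some a /\ ((D < dep z)%N -> (D < dep y)%N /\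
                    anc_at hex D.+1 y = anc_at hex D.+1 z).
  move=> y a ha' hac; case: (hch y) => [e|[[yr e]|[oy [b [e cb]]]]].
  + by exists y; split => //; rewrite -e.
  + exists (p y); split; first by rewrite -e.
    move=> dpy; split; first by rewrite (depth_p hex yr); lia.
    by apply: anc_at_p.
  + by move: ha'; rewrite e => -[eb]; move: hac; rewrite -eb ltnNge cb.
move=> y y' a hy hy' Ca.
case: (ltnP a st.1.2) => ac; last first.
  have yy' := hfr _ _ _ hy hy' ac; subst y'; split => //.
  case: (hch y) => [e|[[yr e]|[oy _]]].
  + by move: (hc0 y a); rewrite -e hy => /(_ erefl); rewrite ltnNge ac.
  + by move: (hc0 (p y) a); rewrite -e hy => /(_ erefl); rewrite ltnNge ac.
  + by move: (hD y); rewrite oy /=; lia.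
have [z [hz1 hz2]] := src _ _ hy ac.
have [z' [hz1' hz2']] := src _ _ hy' ac.
have [dz az] := J2 _ _ _ hz1 hz1' Ca.
have [dz' _] := J2 _ _ _ hz1' hz1 Ca.
have [dy ay] := hz2 dz; have [_ ay'] := hz2' dz'.
by split => //; rewrite ay ay' az.
Qed.

Definition good (st : state V) (i : nat) : bool :=
  (i <= delta)%N && (if st.1.1 (xp i) is Some a then (a < C)%N else false).

Definition hmax (st : state V) : nat := \max_(i < delta.+1 | good st i) (i : nat).

Lemma hmax_ge st i : good st i -> (i <= hmax st)%N.
Proof.
move=> g; have hi : (i < delta.+1)%N by case/andP: g.
exact: (@leq_bigmax_cond _ (fun j : 'I_delta.+1 => good st j) (fun j => j : nat) (Ordinal hi)).
Qed.

Lemma hmax_le st : (hmax st <= delta)%N.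
Proof. by apply/bigmax_leqP => i _; rewrite -ltnS. Qed.

Lemma hmax_good st : good st 0 -> good st (hmax st).
Proof.
move=> g0.
have : (0 < #|[pred j : 'I_delta.+1 | good st j]|)%N.
  by apply/card_gt0P; exists ord0.
case/(eq_bigmax_cond (fun j : 'I_delta.+1 => j : nat)) => i0 hin heq.
have -> : hmax st = i0 by exact: heq.
exact: hin.
Qed.

Lemma good0 s st : (D <= s)%N -> Inv s st -> Jinv st -> good st 0.
Proof.
move=> Ds [_ _ hD _] [_ J1 _]; rewrite /good /=.
have d0 : dep (xp 0) = D by rewrite dep_xp // addn0.
case e: (st.1.1 (xp 0)) => [a|].
  by apply: J1 e; rewrite d0.
by move: (hD (xp 0)); rewrite e d0 Ds.
Qed.

Lemma good_le s st i : Inv s st -> good st i -> (D + i <= s)%N.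
Proof.
case=> _ _ hD _ /andP[id]; rewrite -(dep_xp id) -hD.
by case: (st.1.1 (xp i)).
Qed.

Lemma good_trans s st ws j : (D <= s)%N -> Inv s st -> Jinv st -> List.In ws (step st) ->
  good ws.2 j -> (j <= hmax st)%N \/
     (j = (hmax st).+1 /\ ws.2.1.1 (xp j) = st.1.1 (xp (hmax st))).
Proof.
move=> Ds hI hJ hin /andP[jd gj].
have [hc hch _ _] := step_char hI hin.
have [JC _ _] := hJ.
move: gj; case e: (ws.2.1.1 (xp j)) => [a|] // aC.
case: (hch (xp j)) => [e'|[[yr e']|[_ [b [e' cb]]]]].
- by left; apply: hmax_ge; rewrite /good jd -e' e.
- case: j jd e e' yr => [|j] jd e e' yr; first by left.
  rewrite p_xp // in e'.
  have gj : good st j by rewrite /good ltnW // -e' e.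
  have := hmax_ge gj; rewrite leq_eqVlt => /orP[/eqP hj|hj].
    by right; rewrite -hj -e' e.
  by left.
- by move: e; rewrite e' => -[eb]; move: aC; rewrite -eb ltnNge (leq_trans JC cb).
Qed.

Lemma cp_bound s st : (D <= s)%N -> Inv s st -> Jinv st ->
  Ex (step st) (fun s' => if (hmax st < delta)%N &&
                     (s'.1.1 (xp (hmax st).+1) == st.1.1 (xp (hmax st))) then 1 else 0)
  <= (if hmax st == (s - D)%N then 1 - alpha else beta).
Proof.
move=> Ds; case: st => [[o c] Sl] hI hJ.
have /andP[a0 a1] := ha; have /andP[b0 b1] := hb.
have g0 := good0 Ds hI hJ.
have gh := hmax_good g0.
have hle := good_le hI gh.
set h := hmax _ in gh hle *.
case: (ltnP h delta) => hd; last first.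
  rewrite (@Ex_eq _ _ _ _ (fun _ => 0)); last by move=> ws _.
  rewrite /Ex big1 => [|ws _]; last by rewrite mulr0.
  by case: ifP; rewrite ?subr_ge0.
have pz : p (xp h.+1) = xp h by rewrite p_xp.
have [hu hS hD hc0] := hI.
rewrite Ex_step /=.
rewrite (@Ex_eq _ _ _ _ (fun x => if x.1 (xp h.+1) == o (p (xp h.+1)) then 1 else 0)); last first.
  by move=> ws _ /=; rewrite pz.
have dz : dep (xp h.+1) = (D + h.+1)%N by rewrite dep_xp.
have ozh : (o (xp h.+1) == None) = (h == (s - D)%N).
  apply/idP/idP.
    move=> /eqP oz; move: (hD (xp h.+1)) => /=; rewrite oz dz /=; lia.
  move=> /eqP hs; move: (hD (xp h.+1)) => /=; rewrite dz hs => e; apply/negPn; rewrite e; lia.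
have zL : xp h.+1 \in stepL nbr r p rank o Sl.
  rewrite /stepL mem_cat mem_filter.
  case: (boolP (o (xp h.+1) == None)) => oz.
    rewrite (nb_depth rank hund hpn _ hI) dz; move: oz; rewrite ozh => /eqP ->.
    by apply/orP; left; apply/eqP; lia.
  by rewrite hS oz xp_nr // orbT.
have ho : o (xp h.+1) != o (p (xp h.+1)).
  rewrite pz; move: gh; rewrite /good /=; case e: (o (xp h)) => [b|]; last by rewrite andbF.
  move=> /andP[_ bC].
  apply/eqP => ez; have gz : good (o, c, Sl) h.+1 by rewrite /good hd /= ez.
  by have := hmax_ge gz; rewrite -/h ltnn.
rewrite -ozh.
exact: (proc_copy ha hb (stepL_uniq nbr rank hI) zL ho hc0).
Qed.


Lemma Ex_affine (T : Type) (l : seq (R * T)) a b g :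
  Ex l (fun x => a + b * g x) = a * Ex l (fun _ => 1) + b * Ex l g.
Proof.
rewrite /Ex !mulr_sumr -big_split; apply: eq_bigr => ws _ /=; ring.
Qed.

Variables (lam mu : R).
Hypothesis hlam : 1 <= lam.
Hypothesis hmu : 0 < mu.
Hypothesis hoff : 1 + (lam - 1) * beta <= mu.
Hypothesis hfront : 1 + (2 * lam - 1) * (1 - alpha) <= 2 * mu.

Definition Phi (k : nat) (st : state V) : R :=
  lam ^+ hmax st / mu ^+ k * (if hmax st == k then 2 else 1).

Lemma Phi_ge0 k st : 0 <= Phi k st.
Proof.
have l0 : 0 <= lam by apply: le_trans hlam.
rewrite /Phi; apply: mulr_ge0; last by case: ifP.
by apply: divr_ge0; [apply: exprn_ge0 | apply: exprn_ge0; apply: ltW].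
Qed.

Lemma Phi_step s st : (D <= s)%N -> Inv s st -> Jinv st ->
  Ex (step st) (Phi (s - D).+1) <= Phi (s - D) st.
Proof.
move=> Ds hI hJ.
have /andP[a0 a1] := ha; have /andP[b0 b1] := hb.
have l0 : 0 <= lam by apply: le_trans hlam.
have g0 := good0 Ds hI hJ.
have hk : (hmax st <= s - D)%N by have := good_le hI (hmax_good g0); lia.
set k := (s - D)%N in hk *.
set h := hmax st in hk *.
set F : R := if h == k then 2 else 1.
set A : R := lam ^+ h / mu ^+ k.+1.
have A0 : 0 <= A by apply: divr_ge0; [apply: exprn_ge0 | apply: exprn_ge0; apply: ltW].
have F1 : 1 <= F by rewrite /F; case: ifP => _; lra.
have lF : 0 <= lam * F - 1.
  rewrite subr_ge0; rewrite -[1]mul1r; apply: ler_pM => //; lra.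
set cp := fun s' : state V => (h < delta)%N && (s'.1.1 (xp h.+1) == st.1.1 (xp h)).
have pw : forall ws, List.In ws (step st) ->
    Phi k.+1 ws.2 <= A * (1 + (lam * F - 1) * (if cp ws.2 then 1 else 0)).
  move=> ws hin.
  have hI' := step_inv hund hpr hpn hI hin.
  have hJ' := Jinv_step Ds hI hJ hin.
  have g0' := good0 (leqW Ds) hI' hJ'.
  have gh' := hmax_good g0'.
  case: (good_trans Ds hI hJ hin gh') => [hle|[he hv]].
    rewrite /Phi; have -> : (hmax ws.2 == k.+1) = false by rewrite ltn_eqF // ltnS (leq_trans hle hk).
    rewrite mulr1; apply: le_trans (_ : A * 1 <= _); last first.
      apply: ler_wpM2l => //; rewrite lerDl; apply: mulr_ge0 => //; by case: ifP.
    rewrite mulr1 /A; apply: ler_wpM2r; first by rewrite invr_ge0; apply: exprn_ge0; apply: ltW.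
    exact: ler_weXn2l.
  have hd : (h < delta)%N by have := hmax_le ws.2; rewrite he.
  have -> : cp ws.2 by rewrite /cp hd /= -he hv.
  rewrite mulr1 addrC subrK /Phi he eqSS -/F /A exprS -/h.
  suff -> : lam * lam ^+ h / mu ^+ k.+1 * F = lam ^+ h / mu ^+ k.+1 * (lam * F) by [].
  ring.
apply: le_trans (_ : Ex (step st) (fun s' => A * (1 + (lam * F - 1) * (if cp s' then 1 else 0))) <= _).
  apply: Ex_le => [ws hin|ws hin]; first by have := step_ge0 ha hb hin.
  exact: pw.
rewrite ExZ Ex_affine step_sum1 mul1r.
have hq := cp_bound Ds hI hJ.
rewrite -/h -/k in hq.
have -> : Ex (step st) (fun x => if cp x then 1 else 0) =
  Ex (step st) (fun s' => if (h < delta)%N && (s'.1.1 (xp h.+1) == st.1.1 (xp h)) then 1 else 0) by [].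
apply: le_trans (_ : A * (1 + (lam * F - 1) * (if h == k then 1 - alpha else beta)) <= _).
  by apply: ler_wpM2l => //; rewrite lerD2l; apply: ler_wpM2l.
have key : 1 + (lam * F - 1) * (if h == k then 1 - alpha else beta) <= mu * F.
  by rewrite /F; case: ifP => _; [rewrite [lam * 2]mulrC [mu * 2]mulrC | rewrite !mulr1].
have mk0 : mu ^+ k != 0 by apply: expf_neq0; rewrite gt_eqF.
have m0 : mu != 0 by rewrite gt_eqF.
have -> : Phi k st = A * (mu * F).
  rewrite /Phi -/h -/F /A exprS; field.
  by rewrite mk0 m0.
by apply: ler_wpM2l.
Qed.

Lemma Phi_run k st0 : Inv D st0 -> st0.1.2 = C ->
  Ex (run alpha beta nbr r p rank k st0) (Phi k) <= Phi 0 st0.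
Proof.
move=> hI hC.
have hJ := Jinv0 hI hC.
have hP : forall s st ws, (D <= s)%N -> Inv s st /\ Jinv st ->
    List.In ws (step st) -> Inv s.+1 ws.2 /\ Jinv ws.2.
  move=> s st ws Ds [h1 h2] hin; split; first by have := step_inv hund hpr hpn h1 hin.
  by have := Jinv_step Ds h1 h2 hin.
elim: k => [|k IH]; first by rewrite Ex1.
rewrite Ex_run_S; apply: le_trans IH.
apply: Ex_le => [ws hin|ws hin]; first by have := run_ge0 ha hb hin.
have [h1 h2] := run_inv hP (conj hI hJ) hin.
have := Phi_step (leq_addr k D) h1 h2.
by rewrite addKn.
Qed.

Lemma Phi0_le st0 : Inv D st0 -> st0.1.2 = C -> Phi 0 st0 <= 2.
Proof.
move=> hI hC; have hJ := Jinv0 hI hC.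
have g0 := good0 (leqnn D) hI hJ.
have := good_le hI (hmax_good g0).
rewrite -[X in (_ <= X)%N]addn0 leq_add2l leqn0 => /eqP h0.
by rewrite /Phi h0 expr0 expr0 divr1 mul1r /=.
Qed.

Lemma run_bound m st0 (E : state V -> bool) :
  Inv D st0 -> st0.1.2 = C ->
  (forall st, Inv (D + m) st -> Jinv st -> E st -> good st delta) ->
  Ex (run alpha beta nbr r p rank m st0) (fun st => if E st then 1 else 0)
  <= 2 * mu ^+ m / lam ^+ delta.
Proof.
move=> hI hC hE.
have hJ := Jinv0 hI hC.
have hP : forall s st ws, (D <= s)%N -> Inv s st /\ Jinv st ->
    List.In ws (step st) -> Inv s.+1 ws.2 /\ Jinv ws.2.
  move=> s st ws Ds [h1 h2] hin; split; first by have := step_inv hund hpr hpn h1 hin.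
  by have := Jinv_step Ds h1 h2 hin.
have lpos : 0 < lam ^+ delta by apply: exprn_gt0; apply: lt_le_trans hlam.
have mpos : 0 < mu ^+ m by apply: exprn_gt0.
apply: le_trans (_ : Ex (run alpha beta nbr r p rank m st0)
                        (fun st => mu ^+ m / lam ^+ delta * Phi m st) <= _).
  apply: Ex_le => [ws hin|ws hin]; first by have := run_ge0 ha hb hin.
  have [h1 h2] := run_inv hP (conj hI hJ) hin.
  case: ifP => hEw; last by apply: mulr_ge0; [apply: divr_ge0; apply: ltW|apply: Phi_ge0].
  have gd := hE _ h1 h2 hEw.
  have hd : hmax ws.2 = delta.
    by apply/eqP; rewrite eqn_leq hmax_le hmax_ge.
  rewrite /Phi hd.
  apply: le_trans (_ : mu ^+ m / lam ^+ delta * (lam ^+ delta / mu ^+ m * 1) <= _).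
    rewrite mulr1 mulrA divfK ?gt_eqF // divff // gt_eqF //.
  apply: ler_wpM2l; first by apply: divr_ge0; apply: ltW.
  apply: ler_wpM2l; first by apply: divr_ge0; apply: ltW.
  by case: ifP => _; lra.
rewrite ExZ.
apply: le_trans (_ : mu ^+ m / lam ^+ delta * 2 <= _); last by rewrite mulrC mulrA.
apply: ler_wpM2l; first by apply: divr_ge0; apply: ltW.
apply: le_trans (Phi_run m hI hC) _.
exact: Phi0_le.
Qed.

End PotSec.


Lemma real_part (R : realType) (alpha beta c : R) (m delta : nat) :
  0 < alpha < 1 -> 0 < beta < 1 -> 0 < c -> (1 <= m)%N ->
  beta * m%:R + (12 / alpha) * powR m%:R (2^-1 + c) < delta%:R ->
  exists lam mu : R, [/\ 1 <= lam, 0 < mu, 1 + (lam - 1) * beta <= mu,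
     1 + (2 * lam - 1) * (1 - alpha) <= 2 * mu &
     2 * mu ^+ m / lam ^+ delta <= expR (- (1 * powR m%:R c))].
Proof.
move=> /andP[a0 a1] /andP[b0 b1] c0 m1 hyp.
set X : R := m%:R.
have X1 : 1 <= X by rewrite /X ler1n.
set sq := Num.sqrt X.
have sq0 : 0 <= sq := sqrtr_ge0 X.
have sq2 : sq ^+ 2 = X by apply: sqr_sqrtr; lra.
have sq1 : 1 <= sq by rewrite -sqrtr1 ler_sqrt.
set eta := alpha / 4.
set eps := eta / sq.
have sqp : 0 < sq by lra.
have e0 : 0 < eps by apply: divr_gt0 => //; rewrite /eta; lra.
have eeta : eps <= eta by rewrite /eps ler_pdivrMr // ler_peMr //; rewrite /eta; lra.
have e14 : eps <= 1/4 by apply: le_trans eeta _; rewrite /eta; lra.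
have Xe2 : X * eps ^+ 2 = eta ^+ 2.
  by rewrite /eps expr_div_n sq2 mulrC divfK // gt_eqF //; lra.
set Y := powR X c.
have Y1 : 1 <= Y by rewrite /Y -(powRr0 X); apply: ler_powR => //; lra.
have hpow : powR X (2^-1 + c) = sq * Y.
  rewrite powRD; last by apply/implyP => _; apply/negP => /eqP X0; move: X1; rewrite X0; lra.
  by rewrite powR12_sqrt //; lra.
rewrite -/X hpow in hyp.
have heta : 12 / alpha * (sq * Y) * eps = 3 * Y.
  by rewrite /eps /eta; field; rewrite gt_eqF // gt_eqF.
set lam := (1 - eps)^-1.
set d := eps / (1 - eps).
have e1 : 0 < 1 - eps by lra.
have hd : lam - 1 = d by rewrite /lam /d; field; rewrite gt_eqF.
have d0 : 0 <= d by apply: divr_ge0; lra.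
have dle : d <= eps + 2 * eps ^+ 2.
  rewrite /d ler_pdivrMr //.
  have : 0 <= eps ^+ 2 * (1 - 2 * eps) by apply: mulr_ge0; [apply: sqr_ge0|lra].
  rewrite expr2; nra.
set mu := 1 + beta * d.
have mu0 : 0 <= mu by rewrite /mu; apply: addr_ge0 => //; apply: mulr_ge0 => //; lra.
exists lam, mu; split.
- by rewrite -subr_ge0 hd.
- by rewrite /mu; apply: lt_le_trans (_ : 0 < 1) _ => //; rewrite lerDl; apply: mulr_ge0 => //; lra.
- by rewrite hd /mu mulrC.
- have lamd : lam = 1 + d by rewrite -hd; ring.
  rewrite lamd /mu.
  have d2 : d <= 2 * eps by apply: le_trans dle _; rewrite expr2; nra.
  have : 0 <= alpha - 4 * eps by rewrite /eta in eeta; lra.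
  nra.
have lam0 : 0 < lam by rewrite /lam invr_gt0.
have hmu : mu ^+ m <= expR (X * (beta * d)).
  rewrite /X expRM_natl; apply: lerXn2r; rewrite ?nnegrE ?expR_ge0 //.
  exact: expR_ge1Dx.
have hlam : (lam ^+ delta)^-1 <= expR (delta%:R * (- eps)).
  rewrite /lam -exprVn invrK expRM_natl; apply: lerXn2r; rewrite ?nnegrE ?expR_ge0 //.
    lra.
  exact: expR_ge1Dx.
have h2 : (2 : R) <= expR 1 by have := expR_ge1Dx (1 : R); move=> h; lra.
apply: le_trans (_ : expR 1 * (expR (X * (beta * d)) * expR (delta%:R * - eps)) <= _).
  rewrite -mulrA; apply: ler_pM => //.
  - by apply: mulr_ge0; [apply: exprn_ge0| rewrite invr_ge0; apply: exprn_ge0; apply: ltW].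
  - by apply: ler_pM => //; [apply: exprn_ge0| rewrite invr_ge0; apply: exprn_ge0; apply: ltW].
rewrite -!expRD ler_expR mul1r.
have hX : X * (beta * d) <= beta * X * eps + 2 * eta ^+ 2.
  have h1 : X * (beta * d) <= X * (beta * (eps + 2 * eps ^+ 2)).
    by apply: ler_wpM2l; [lra| apply: ler_wpM2l; lra].
  have E : X * (beta * (eps + 2 * eps ^+ 2)) = beta * X * eps + 2 * (beta * (X * eps ^+ 2)).
    by ring.
  have h3 : beta * (X * eps ^+ 2) <= X * eps ^+ 2.
    rewrite -[X in _ <= X]mul1r; apply: ler_wpM2r; last lra.
    by rewrite Xe2 sqr_ge0.
  rewrite Xe2 in h3; rewrite E Xe2 in h1; lra.
have hdel : beta * X * eps + 3 * Y < delta%:R * eps.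
  by move: hyp; rewrite -(ltr_pM2r e0) mulrDl heta.
have eta2 : eta ^+ 2 <= 1 / 16 by rewrite expr2 /eta; nra.
lra.
Qed.


Lemma gdist_uniq (V : eqType) (nbr : V -> seq V) r v n n' :
  gdist nbr r v n -> gdist nbr r v n' -> n = n'.
Proof.
case=> [[s [hs hl hz]] hm] [[s' [hs' hl' hz']] hm'].
apply/eqP; rewrite eqn_leq; apply/andP; split.
  by rewrite -hz'; apply: hm.
by rewrite -hz; apply: hm'.
Qed.

Theorem mainTheorem13 (R : realType) (alpha beta c : R) :
  0 < alpha < 1 -> 0 < beta < 1 -> 0 < c ->
  exists K c1 c2 : R, [/\ 0 < K, 0 < c1, 0 < c2 &
    forall (V : eqType) (nbr : V -> seq V) (r : V) (p : V -> V)
           (rank : V -> nat),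
      undirected nbr -> bfs_tree nbr r p -> injective rank ->
      forall (t : nat), (0 < t)%N ->
      forall (u v w : V) (D delta du dv : nat),
        (exists2 n, gdist nbr r u n & (n <= t)%N) ->
        (exists2 n, gdist nbr r v n & (n <= t)%N) ->
        is_lca r p u v w ->
        tdist p r w D ->
        tdist p w u du -> tdist p w v dv -> delta = maxn du dv ->
        beta * (t - D)%N%:R + K * powR (t - D)%N%:R (2^-1 + c) < delta%:R ->
        prob alpha beta nbr r p rank t
             (fun st => origin st u == origin st v)
        <= expR (- (c1 * powR (t - D)%N%:R c2))].
Proof.
move=> ha hb hc.
have /andP[a0 a1] := ha; have /andP[b0 b1] := hb.
have ha' : 0 <= alpha <= 1 by apply/andP; split; apply: ltW.
have hb' : 0 <= beta <= 1 by apply/andP; split; apply: ltW.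
exists (12 / alpha), 1, c; split => //; first by apply: divr_gt0.
move=> V nbr r p rank hund [hpr hpn hbfs] _ t t0 u v w D delta du dv
  [nu gu nut] [nv gv nvt] hlca hwD hdu hdv hdelta hyp.
have hex : forall y, exists n, iter n p y == r.
  by move=> y; case: (hbfs y) => n [[h _] _]; exists n; apply/eqP.
have hdep : forall y n, gdist nbr r y n -> depth hex y = n.
  move=> y n g; case: (hbfs y) => n' [td gd]; rewrite -(tdist_depth hex td).
  exact: gdist_uniq gd g.
have du_t : (depth hex u <= t)%N by rewrite (hdep _ _ gu).
have dv_t : (depth hex v <= t)%N by rewrite (hdep _ _ gv).
have hD : D = depth hex w := tdist_depth hex hwD.
have [dpu iu] := tdist_anc hpr hex hdu.
have [dpv iv] := tdist_anc hpr hex hdv.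
rewrite -hD in dpu dpv.
pose zend := if (du <= dv)%N then v else u.
have hz : depth hex zend = (D + delta)%N.
  rewrite /zend hdelta; case: leqP => h.
    by rewrite dpv ?(maxn_idPr h).
  by rewrite dpu ?(maxn_idPl (ltnW h)).
have hzt : (D + delta <= t)%N.
  by rewrite -hz /zend; case: (leqP du dv).
have Dt : (D <= t)%N by apply: leq_trans hzt; apply: leq_addr.
move: hyp; set m := (t - D)%N => hyp.
have dm : (delta <= m)%N by rewrite /m; lia.
have m1 : (1 <= m)%N.
  case: (posnP m) => [m0|] //; exfalso.
  move: dm hyp; rewrite m0 leqn0 => /eqP ->; rewrite powR0; last first.
    apply/negP => /eqP h.
    have : (0 : R) < 2^-1 + c by rewrite addr_gt0 // invr_gt0.
    by rewrite h ltxx.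
  by rewrite mulr0 mulr0 addr0 ltxx.
have [lam [mu [hl hm hoff hfront hfin]]] := real_part ha hb hc m1 hyp.
apply: le_trans hfin.
have -> : prob alpha beta nbr r p rank t (fun st => origin st u == origin st v) =
   Ex (dist alpha beta nbr r p rank t)
      (fun st => if origin st u == origin st v then 1 else 0).
  rewrite /prob /Ex; apply: eq_bigr => ws _.
  by case: ifP; rewrite ?mulr1 ?mulr0.
rewrite dist_run -(subnKC Dt) -/m Ex_run_add.
apply: le_trans (_ : Ex (run alpha beta nbr r p rank D (init_state r))
                        (fun _ => 2 * mu ^+ m / lam ^+ delta) <= _); last first.
  by rewrite Ex_const run_sum1 mulr1.
apply: Ex_le => [ws hin|ws hin]; first by have := run_ge0 ha' hb' hin.
have hP : forall s st ws', (0 <= s)%N -> Inv hex s st ->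
    List.In ws' (step alpha beta nbr r p rank st) -> Inv hex s.+1 ws'.2.
  by move=> s st ws' _ h h'; have := step_inv hund hpr hpn h h'.
have := run_inv hP (Inv0 hex) hin; rewrite add0n => hI.
apply: (run_bound rank ha' hb' hund hpr hpn hz hl hm hoff hfront hI erefl).
move=> st hIt hJ hE.
have [_ _ hDt _] := hIt.
rewrite subnKC // in hDt.
have [a eu] : exists a, st.1.1 u = Some a.
  case e: (st.1.1 u) => [a|]; first by exists a.
  by move: (hDt u); rewrite e du_t.
have ev : st.1.1 v = Some a by move/eqP: hE; rewrite /origin eu.
rewrite /good leqnn /= /xp subnn /=.
have hzc : st.1.1 zend = Some a by rewrite /zend; case: (leqP du dv).
rewrite hzc; case: (ltnP a ws.2.1.2) => // Ca; exfalso.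
have [_ _ J2] := hJ.
have [dU ea] := J2 _ _ _ eu ev Ca.
have [dV _] := J2 _ _ _ ev eu Ca.
case: hlca => _ _ hmax.
have h1 : anc p (anc_at hex D.+1 u) u by exists (depth hex u - D.+1)%N.
have h2 : anc p (anc_at hex D.+1 u) v by exists (depth hex v - D.+1)%N; rewrite ea.
have h3 : tdist p r (anc_at hex D.+1 u) D.+1.
  by have := tdist_depthP hex (anc_at hex D.+1 u); rewrite (depth_anc_at hpr dU).
by have := hmax _ _ _ h1 h2 h3 hwD; rewrite ltnn.
Qed.
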